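(* Let $G$ be a game and let $H$ be the game obtained from $G$ by removing a dominated option (a Left option $G^{L_1}$ for which some other Left option $G^{L_2}$ satisfies $G^{L_1}\le G^{L_2}$, or a Right option $G^{R_1}$ for which some other Right option $G^{R_2}$ satisfies $G^{R_2}\le G^{R_1}$). Then $G \triangleq H$.
   Context: Games are short (finite) normal-play combinatorial games between players Left and Right, written $G\cong\{L(G)\mid R(G)\}$, where $\cong$ denotes identity of literal forms (game trees) and $L(G),R(G)$ are the sets of Left and Right options. The disjunctive sum is $G+H\cong\{L(G)+H,\,G+L(H)\mid R(G)+H,\,G+R(H)\}$, negation is $-G\cong\{-R(G)\mid -L(G)\}$, and $G-H$ means $G+(-H)$; $\le$ and $=$ are the usual partial order and equality of game values ($G\le H$ iff Left wins $H-G$ when Right moves first). Equivalence modulo domination: $G\triangleq H$ means that in $G+(-H)$, for every move by either player (as first player) in one of the two summands, the other player has a response in the other summand after which the responding player wins (with the first player to move next). *)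

(* Defs.v *)
From Stdlib Require Import List Arith.
Import ListNotations.

Inductive game : Type := Game : list game -> list game -> game.

Definition lopts (G : game) : list game := match G with Game l _ => l end.
Definition ropts (G : game) : list game := match G with Game _ r => r end.

Fixpoint neg (G : game) : game :=
  match G with Game l r => Game (map neg r) (map neg l) end.

Fixpoint add (G H : game) : game :=
  match G with
  | Game gl gr =>
      let fix addH (H : game) : game :=
        match H with
        | Game hl hr =>
            Game (map (fun g => add g H) gl ++ map addH hl)
                 (map (fun g => add g H) gr ++ map addH hr)
        end in addH H
  end.

(* Normal play: lwin true X  = Left wins X moving first;
                lwin false X = Left wins X when Right moves first. *)
Fixpoint lwin (first : bool) (X : game) : Prop :=
  match X with
  | Game l r =>
      if first then
        (fix ex (s : list game) : Prop :=
           match s with [] => False | x :: s' => lwin false x \/ ex s' end) l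
      else
        (fix all (s : list game) : Prop :=
           match s with [] => True | x :: s' => lwin true x /\ all s' end) r
  end.

(* rwin true X = Right wins X moving first;
   rwin false X = Right wins X when Left moves first. *)
Fixpoint rwin (first : bool) (X : game) : Prop :=
  match X with
  | Game l r =>
      if first then
        (fix ex (s : list game) : Prop :=
           match s with [] => False | x :: s' => rwin false x \/ ex s' end) r
      else
        (fix all (s : list game) : Prop :=
           match s with [] => True | x :: s' => rwin true x /\ all s' end) l
  end.

Definition game_le (G H : game) : Prop := lwin false (add H (neg G)).

(* Equivalence modulo domination G ≜ H, read off the sum G + (-H):
   every move by either player in one summand has a reply by the other
   player in the other summand after which the replying player wins
   with the original mover to move next. *)
Definition dom_equiv (G H : game) : Prop :=
  (* Left moves in G to G^L + (-H); Right replies in -H *)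
  (forall GL, In GL (lopts G) ->
     exists Y, In Y (ropts (neg H)) /\ rwin false (add GL Y)) /\
  (* Left moves in -H to G + X; Right replies in G *)
  (forall X, In X (lopts (neg H)) ->
     exists GR, In GR (ropts G) /\ rwin false (add GR X)) /\
  (* Right moves in G to G^R + (-H); Left replies in -H *)
  (forall GR, In GR (ropts G) ->
     exists Y, In Y (lopts (neg H)) /\ lwin false (add GR Y)) /\
  (* Right moves in -H to G + X; Left replies in G *)
  (forall X, In X (ropts (neg H)) ->
     exists GL, In GL (lopts G) /\ lwin false (add GL X)).

Definition remove_at {A : Type} (i : nat) (l : list A) : list A :=
  firstn i l ++ skipn (S i) l.

Definition game0 : game := Game [] [].

(* Main.v *)
Require Import Defs.
From Stdlib Require Import List Arith Lia.
Import ListNotations.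

Lemma lwin_t X : lwin true X <-> exists x, In x (lopts X) /\ lwin false x.
Proof. destruct X as [l r]; simpl. induction l as [|a l IH]; simpl.
 - firstorder.
 - rewrite IH. firstorder congruence. Qed.
Lemma lwin_f X : lwin false X <-> forall x, In x (ropts X) -> lwin true x.
Proof. destruct X as [l r]; simpl. induction r as [|a r IH]; simpl.
 - firstorder.
 - rewrite IH. firstorder congruence. Qed.
Lemma rwin_t X : rwin true X <-> exists x, In x (ropts X) /\ rwin false x.
Proof. destruct X as [l r]; simpl. induction r as [|a r IH]; simpl.
 - firstorder.
 - rewrite IH. firstorder congruence. Qed.
Lemma rwin_f X : rwin false X <-> forall x, In x (lopts X) -> rwin true x.
Proof. destruct X as [l r]; simpl. induction l as [|a l IH]; simpl.
 - firstorder.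
 - rewrite IH. firstorder congruence. Qed.

Lemma add_eq A B : add A B = Game (map (fun a => add a B) (lopts A) ++ map (fun b => add A b) (lopts B))
  (map (fun a => add a B) (ropts A) ++ map (fun b => add A b) (ropts B)).
Proof. destruct A, B; reflexivity. Qed.

Definition game_ind' (P : game -> Prop)
  (H : forall l r, Forall P l -> Forall P r -> P (Game l r)) : forall g, P g :=
  fix F g := match g with Game l r =>
    H l r ((fix fl l := match l return Forall P l with [] => Forall_nil _ | x :: l' => Forall_cons _ (F x) (fl l') end) l)
          ((fix fl l := match l return Forall P l with [] => Forall_nil _ | x :: l' => Forall_cons _ (F x) (fl l') end) r)
  end.

Lemma lopts_add A B z : In z (lopts (add A B)) <-> (exists a, In a (lopts A) /\ z = add a B) \/ (exists b, In b (lopts B) /\ z = add A b).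
Proof. rewrite add_eq; simpl. rewrite in_app_iff, !in_map_iff. firstorder. Qed.
Lemma ropts_add A B z : In z (ropts (add A B)) <-> (exists a, In a (ropts A) /\ z = add a B) \/ (exists b, In b (ropts B) /\ z = add A b).
Proof. rewrite add_eq; simpl. rewrite in_app_iff, !in_map_iff. firstorder. Qed.

Lemma neg_neg X : neg (neg X) = X.
Proof. induction X using game_ind'; simpl. rewrite !map_map.
 f_equal; [rewrite <- (map_id l) at 2| rewrite <- (map_id r) at 2]; apply map_ext_in;
 intros; [eapply Forall_forall in H|eapply Forall_forall in H0]; eauto. Qed.

Lemma neg_add A : forall B, neg (add A B) = add (neg A) (neg B).
Proof. induction A as [al ar IHal IHar] using game_ind'. intro B.
 induction B as [bl br IHbl IHbr] using game_ind'.
 rewrite add_eq, (add_eq (neg _)). simpl. rewrite !map_app, !map_map. f_equal; f_equal; apply map_ext_in; intros x Hx.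
 - eapply Forall_forall in IHar; eauto; apply IHar.
 - eapply Forall_forall in IHbr; eauto.
 - eapply Forall_forall in IHal; eauto; apply IHal.
 - eapply Forall_forall in IHbl; eauto.
Qed.

Lemma rwin_neg X : forall f, rwin f (neg X) <-> lwin f X.
Proof. induction X as [l r IHl IHr] using game_ind'; intros [|].
 - rewrite rwin_t, lwin_t; simpl. split.
   + intros [x [Hx Hw]]. apply in_map_iff in Hx as [y [<- Hy]]. exists y; split; auto.
     eapply Forall_forall in IHl; eauto. apply IHl; auto.
   + intros [y [Hy Hw]]. exists (neg y); split; [apply in_map; auto|].
     eapply Forall_forall in IHl; eauto. apply IHl; auto.
 - rewrite rwin_f, lwin_f; simpl. split.
   + intros H y Hy. eapply Forall_forall in IHr; eauto. apply IHr, H, in_map; auto.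
   + intros H x Hx. apply in_map_iff in Hx as [y [<- Hy]].
     eapply Forall_forall in IHr; eauto. apply IHr; auto.
Qed.

Lemma lwin_comm A : forall B f, lwin f (add A B) -> lwin f (add B A).
Proof. induction A as [al ar IHal IHar] using game_ind'. intro B.
 induction B as [bl br IHbl IHbr] using game_ind'. intros [|].
 - rewrite !lwin_t. intros [z [Hz Hw]]. apply lopts_add in Hz as [[a [Ha ->]]|[b [Hb ->]]].
   + exists (add (Game bl br) a); split. apply lopts_add; right; eauto.
     eapply Forall_forall in IHal; eauto.
   + exists (add b (Game al ar)); split. apply lopts_add; left; eauto.
     eapply Forall_forall in IHbl; eauto.
 - rewrite !lwin_f. intros H z Hz. apply ropts_add in Hz as [[b [Hb ->]]|[a [Ha ->]]].
   + eapply Forall_forall in IHbr; eauto. apply IHbr, H, ropts_add; right; eauto.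
   + eapply Forall_forall in IHar; eauto. apply IHar, H, ropts_add; left; eauto.
Qed.

Lemma mirror X : lwin false (add X (neg X)) /\ rwin false (add X (neg X)).
Proof. induction X as [l r IHl IHr] using game_ind'. split.
 - apply lwin_f. intros z Hz. apply ropts_add in Hz as [[a [Ha ->]]|[b [Hb ->]]]; apply lwin_t.
   + exists (add a (neg a)). split; [apply lopts_add; right; exists (neg a); split; simpl; auto; apply in_map; auto|].
     eapply Forall_forall in IHr; eauto. apply IHr.
   + simpl in Hb. apply in_map_iff in Hb as [a [<- Ha]].
     exists (add a (neg a)). split; [apply lopts_add; left; eauto|].
     eapply Forall_forall in IHl; eauto. apply IHl.
 - apply rwin_f. intros z Hz. apply lopts_add in Hz as [[a [Ha ->]]|[b [Hb ->]]]; apply rwin_t.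
   + exists (add a (neg a)). split; [apply ropts_add; right; exists (neg a); split; simpl; auto; apply in_map; auto|].
     eapply Forall_forall in IHl; eauto. apply IHl.
   + simpl in Hb. apply in_map_iff in Hb as [a [<- Ha]].
     exists (add a (neg a)). split; [apply ropts_add; left; eauto|].
     eapply Forall_forall in IHr; eauto. apply IHr.
Qed.

Lemma flip A B : lwin false (add B (neg A)) -> rwin false (add A (neg B)).
Proof. intro H. rewrite <- (neg_neg (add A (neg B))), rwin_neg, neg_add, neg_neg. apply lwin_comm; auto. Qed.


Lemma split_at {T} (l : list T) i d : i < length l ->
  l = firstn i l ++ nth i l d :: skipn (S i) l.
Proof. revert i; induction l as [|a l IH]; intros [|i] Hi; simpl in *; try lia; auto.
 f_equal. apply IH. lia. Qed.

Lemma remove_in {T} (l : list T) i x : In x (remove_at i l) -> In x l.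
Proof. unfold remove_at. intro H. apply in_app_iff in H as [H|H].
 - rewrite <- (firstn_skipn i l). apply in_app_iff; auto.
 - rewrite <- (firstn_skipn (S i) l). apply in_app_iff; auto. Qed.

Lemma in_remove {T} (l : list T) i x d : i < length l -> In x l -> In x (remove_at i l) \/ x = nth i l d.
Proof. intros Hi Hx. rewrite (split_at l i d Hi) in Hx. unfold remove_at.
 apply in_app_iff in Hx as [H|[H|H]]; auto; left; apply in_app_iff; auto. Qed.

Lemma nth_remove {T} (l : list T) i j d : i < length l -> j < length l -> i <> j ->
  In (nth j l d) (remove_at i l).
Proof. revert i j; induction l as [|a l IH]; intros [|i] [|j] Hi Hj Hij; simpl in *; try lia.
 - unfold remove_at; simpl. apply nth_In; lia.
 - unfold remove_at; simpl; auto.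
 - unfold remove_at in *; simpl. right. apply IH; lia. Qed.

Theorem lemma2p1 :
  (forall (gl gr : list game) (i j : nat),
     i < length gl -> j < length gl -> i <> j ->
     game_le (nth i gl game0) (nth j gl game0) ->
     dom_equiv (Game gl gr) (Game (remove_at i gl) gr)) /\
  (forall (gl gr : list game) (i j : nat),
     i < length gr -> j < length gr -> i <> j ->
     game_le (nth j gr game0) (nth i gr game0) ->
     dom_equiv (Game gl gr) (Game gl (remove_at i gr))).
Proof.
 split; intros gl gr i j Hi Hj Hij Hle; unfold game_le in Hle; repeat split; simpl.
 - intros GL HGL. destruct (in_remove gl i GL game0 Hi HGL) as [H|HE]; [|subst].
   + exists (neg GL); split; [apply in_map; auto | apply mirror].
   + exists (neg (nth j gl game0)); split; [apply in_map, nth_remove; auto | apply flip; auto].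
 - intros X HX. apply in_map_iff in HX as [GR [<- HGR]]. exists GR; split; auto; apply mirror.
 - intros GR HGR. exists (neg GR); split; [apply in_map; auto | apply mirror].
 - intros X HX. apply in_map_iff in HX as [GL [<- HGL]]. exists GL; split; [eapply remove_in; eauto | apply mirror].
 - intros GL HGL. exists (neg GL); split; [apply in_map; auto | apply mirror].
 - intros X HX. apply in_map_iff in HX as [GR [<- HGR]]. exists GR; split; [eapply remove_in; eauto | apply mirror].
 - intros GR HGR. destruct (in_remove gr i GR game0 Hi HGR) as [H|HE]; [|subst].
   + exists (neg GR); split; [apply in_map; auto | apply mirror].
   + exists (neg (nth j gr game0)); split; [apply in_map, nth_remove; auto | auto].
 - intros X HX. apply in_map_iff in HX as [GL [<- HGL]]. exists GL; split; auto; apply mirror.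
Qed.
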